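(* The following identities of formal power series hold: $$(1,1,52,q)=(1,1,6,q^9)+P_{3,1}(1,1,6,q),\qquad (8,7,8,q)=(1,1,6,q^9)+P_{3,2}(1,1,6,q),$$ $$(4,1,13,q)=(2,1,3,q^9)+P_{3,1}(2,1,3,q),\qquad (2,1,26,q)=(2,1,3,q^9)+P_{3,2}(2,1,3,q).$$
   Context: For integers $A,B,C$ with $A>0$ and $B^2-4AC<0$, $(A,B,C,q):=\sum_{(x,y)\in\mathbb Z^2}q^{Ax^2+Bxy+Cy^2}$, and $(A,B,C,q^k)$ is this series with $q\mapsto q^k$. For $m\ge1$, $0\le r<m$: $P_{m,r}\sum_{n\ge0}a(n)q^n=\sum_{n\ge0}a(mn+r)q^{mn+r}$. *)

(* Defs.v *)
From mathcomp Require Import all_boot all_order all_algebra.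
Set Implicit Arguments. Unset Strict Implicit. Unset Printing Implicit Defensive.
Import Order.TTheory GRing.Theory Num.Theory.
Local Open Scope ring_scope.

Definition fps := nat -> nat.

Definition qform (A B C x y : int) : int := A * x ^+ 2 + B * x * y + C * y ^+ 2.

(* Search bound for representations of n: if A > 0 and B^2 - 4AC < 0 then
   4A*Q(x,y) = (2Ax+By)^2 + (4AC-B^2) y^2 >= y^2 and similarly 4C*Q >= x^2,
   so every (x,y) with Q(x,y) = n satisfies |x|,|y| <= 4(|A|+|C|) n. *)
Definition rep_bound (A C : int) (n : nat) : nat :=
  (4 * (`|A|%N + `|C|%N) * n)%N.

(* coefficient of q^n in (A,B,C,q) = #{(x,y) in Z^2 | Q(x,y) = n} *)
Definition theta (A B C : int) : fps := fun n =>
  let M := rep_bound A C n in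
  (\sum_(i < (2 * M).+1) \sum_(j < (2 * M).+1)
     (qform A B C (i%:Z - M%:Z) (j%:Z - M%:Z) == n%:Z))%N.

Definition dilate (k : nat) (f : fps) : fps := fun n =>
  if (k %| n)%N then f (n %/ k)%N else 0%N.

Definition Pmr (m r : nat) (f : fps) : fps := fun n =>
  if (n %% m == r)%N then f n else 0%N.

Definition fps_add (f g : fps) : fps := fun n => (f n + g n)%N.

(* Main.v *)
Require Import Defs.
From mathcomp Require Import all_boot all_order all_algebra.
From mathcomp Require Import zify ring lra.
From Stdlib Require Import FunctionalExtensionality.
Import Order.TTheory GRing.Theory Num.Theory.
Local Open Scope ring_scope.

Definition box (M : nat) : seq (int * int) :=
  [seq (i%:Z - M%:Z, j%:Z - M%:Z) | i <- iota 0 (2 * M).+1, j <- iota 0 (2 * M).+1].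

Definition sol A B C n :=
  [seq p <- box (rep_bound A C n) | qform A B C p.1 p.2 == n%:Z].

Lemma theta_sol A B C n : theta A B C n = size (sol A B C n).
Proof.
rewrite /sol size_filter; set M := rep_bound A C n.
pose F (i j : nat) : nat := nat_of_bool (qform A B C (i%:Z - M%:Z) (j%:Z - M%:Z) == n%:Z).
have -> : theta A B C n = (\sum_(i < (2 * M).+1) \sum_(j < (2 * M).+1) F i j)%N by [].
rewrite -(big_mkord xpredT (fun i => \sum_(j < (2 * M).+1) F i j)%N).
rewrite -sum1_count /box /allpairs big_flatten big_map /index_iota subn0.
apply: eq_bigr => i _; rewrite -(big_mkord xpredT (F i)) /index_iota subn0 big_map big_mkcond.
by apply: eq_bigr => j _; rewrite /F; case: (_ == _).
Qed.

Lemma box_uniq M : uniq (box M).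
Proof.
apply: allpairs_uniq; rewrite ?iota_uniq //.
move=> [a b] [c d] _ _ /= [] h1 h2. congr pair; lia.
Qed.

Lemma mem_box M p : (p \in box M) =
  ((- M%:Z <= p.1 <= M%:Z) && (- M%:Z <= p.2 <= M%:Z)).
Proof.
apply/allpairsP/idP.
  move=> [[i j] [hi hj ->]]; move: hi hj; rewrite !mem_iota /=; lia.
case: p => x y h; simpl in h.
exists (absz (x + M%:Z), absz (y + M%:Z)); rewrite !mem_iota.
split; [simpl; lia | simpl; lia | congr pair; simpl; lia].
Qed.

Definition bounded A B C := forall x y (n : nat), qform A B C x y = n%:Z ->
  `|x| <= (rep_bound A C n)%:Z /\ `|y| <= (rep_bound A C n)%:Z.

Lemma mem_sol A B C n p : bounded A B C ->
  (p \in sol A B C n) = (qform A B C p.1 p.2 == n%:Z).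
Proof.
move=> hb; rewrite mem_filter mem_box.
case E: (qform _ _ _ _ _ == _) => //=.
have [] := hb _ _ _ (eqP E); lia.
Qed.

Lemma sol_uniq A B C n : uniq (sol A B C n).
Proof. exact/filter_uniq/box_uniq. Qed.

Lemma transfer (Q1 Q2 : int * int -> int) (m : int) (s1 s2 : seq (int * int))
  (f g : int * int -> int * int) (P : pred (int * int)) :
  uniq s1 -> uniq s2 -> (forall p, (p \in s1) = (Q1 p == m)) ->
  (forall p, (p \in s2) = (Q2 p == m)) -> (forall p, Q2 (f p) = Q1 p) ->
  (forall p, P (f p)) -> (forall p, P p -> f (g p) = p) -> injective f ->
  size s1 = count P s2.
Proof.
move=> u1 u2 m1 m2 hQ hP hfg finj.
rewrite -size_filter -(size_map f); apply: perm_size; apply: uniq_perm.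
- by rewrite map_inj_uniq.
- exact: filter_uniq.
move=> p; rewrite mem_filter; apply/mapP/idP.
  by move=> [q hq ->]; rewrite hP m2 hQ -m1.
move=> /andP[hp]; rewrite m2 => hq; exists (g p); last by rewrite hfg.
by rewrite m1 -hQ hfg.
Qed.

Lemma res3 A B C x y : exists K, qform A B C x y =
  3 * K + (A * (x %% 3)%Z * (x %% 3)%Z + B * (x %% 3)%Z * (y %% 3)%Z + C * (y %% 3)%Z * (y %% 3)%Z).
Proof.
set r := (x %% 3)%Z; set s := (y %% 3)%Z.
have hx : x = 3 * (x %/ 3)%Z + r by rewrite /r; lia.
have hy : y = 3 * (y %/ 3)%Z + s by rewrite /s; lia.
set a := (x %/ 3)%Z in hx; set b := (y %/ 3)%Z in hy.
exists (A * (3 * a ^+ 2 + 2 * a * r) + B * (3 * a * b + a * s + r * b) + C * (3 * b ^+ 2 + 2 * b * s)).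
rewrite /qform hx hy; ring.
Qed.

Lemma split3 A B C (P : pred (int * int)) (r n : nat) :
  bounded A B C -> (0 < r < 3)%N ->
  (forall x y (m : nat), qform A B C x y = m%:Z -> (m %% 3 == r)%N -> P (x, y)) ->
  (forall x y (m : nat), qform A B C x y = m%:Z -> (m %% 3 != r)%N -> (m %% 3 != 0)%N -> ~~ P (x, y)) ->
  (forall x y (m : nat), qform A B C x y = m%:Z -> (m %% 3 == 0)%N ->
     P (x, y) = ((x %% 3 == 0)%Z && (y %% 3 == 0)%Z)) ->
  count P (sol A B C n) = fps_add (dilate 9 (theta A B C)) (Pmr 3 r (theta A B C)) n.
Proof.
move=> hb hr H1 H2 H3.
rewrite /fps_add /dilate /Pmr !theta_sol.
have mem p m : (p \in sol A B C m) = (qform A B C p.1 p.2 == m%:Z) by exact: mem_sol.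
have [e|ne] := eqVneq (n %% 3)%N r.
  have -> : (9 %| n)%N = false by lia.
  rewrite ?eqxx add0n; apply/eqP; rewrite -all_count; apply/allP => -[x y].
  by rewrite mem => /eqP h; apply: H1 h _; apply/eqP.
rewrite ?(negbTE ne) addn0.
have [z|nz] := eqVneq (n %% 3)%N 0%N; last first.
  have -> : (9 %| n)%N = false by lia.
  rewrite (eq_in_count (a2 := pred0)) ?count_pred0 // => -[x y].
  by rewrite mem => /eqP h /=; apply/negbTE; apply: H2 h ne nz.
rewrite (eq_in_count (a2 := fun p => (p.1 %% 3 == 0)%Z && (p.2 %% 3 == 0)%Z)); last first.
  by move=> [x y]; rewrite mem => /eqP h; apply: H3 h _; apply/eqP.
case: ifP => h9.
  symmetry; apply: (@transfer (fun p => 9 * qform A B C p.1 p.2)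
     (fun p => qform A B C p.1 p.2) n%:Z _ _
     (fun p => (3 * p.1, 3 * p.2)) (fun p => ((p.1 %/ 3)%Z, (p.2 %/ 3)%Z))).
  - exact: sol_uniq.
  - exact: sol_uniq.
  - move=> p; rewrite mem /=; move/dvdnP: h9 => [k ->]; rewrite mulnK //; apply/eqP/eqP; lia.
  - by move=> p; exact: mem.
  - by move=> p; rewrite /qform /=; ring.
  - by move=> p /=; apply/andP; split; apply/eqP; lia.
  - by move=> [x y] /= /andP[/eqP hx /eqP hy]; congr pair; lia.
  - by move=> [a b] [c d] /= [] h1 h2; congr pair; lia.
apply/eqP; rewrite -leqn0 leqNgt -has_count; apply/hasP => -[[x y] hp /andP[/eqP hx /eqP hy]].
move: hp; rewrite mem /= => /eqP h.
have ex : x = 3 * (x %/ 3)%Z by lia.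
have ey : y = 3 * (y %/ 3)%Z by lia.
have : qform A B C x y = 9 * qform A B C (x %/ 3)%Z (y %/ 3)%Z.
  by rewrite {1}ex {1}ey /qform; ring.
lia.
Qed.

Lemma via A B C A' B' C' (f g : int * int -> int * int) (P : pred (int * int)) n :
  bounded A B C -> bounded A' B' C' ->
  (forall p, qform A B C (f p).1 (f p).2 = qform A' B' C' p.1 p.2) ->
  (forall p, P (f p)) -> (forall p, P p -> f (g p) = p) -> injective f ->
  theta A' B' C' n = count P (sol A B C n).
Proof.
move=> hb hb' hQ hP hfg fi; rewrite theta_sol.
apply: (@transfer (fun p => qform A' B' C' p.1 p.2) (fun p => qform A B C p.1 p.2) n%:Z _ _ f g P _ _ _ _ _ hP hfg fi).
- exact: sol_uniq.
- exact: sol_uniq.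
- by move=> p; exact: mem_sol.
- by move=> p; exact: mem_sol.
- exact: hQ.
Qed.

Lemma abs_sq (x : int) : `|x| <= x ^+ 2.
Proof. nia. Qed.

Ltac bnd A B C := let x := fresh "x" in let y := fresh "y" in
  let n := fresh "n" in let h := fresh "h" in
  intros x y n h; rewrite /rep_bound; rewrite /qform in h;
  have := abs_sq x; have := abs_sq y;
  have := sqr_ge0 ((B:int) * x + 2 * (C:int) * y); have := sqr_ge0 (2 * (A:int) * x + (B:int) * y);
  intros; split; nia.

Lemma b1 : bounded 1 1 52. Proof. bnd (1:int) (1:int) (52:int). Qed.
Lemma b2 : bounded 8 7 8. Proof. bnd (8:int) (7:int) (8:int). Qed.
Lemma b3 : bounded 4 1 13. Proof. bnd (4:int) (1:int) (13:int). Qed.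
Lemma b4 : bounded 2 1 26. Proof. bnd (2:int) (1:int) (26:int). Qed.
Lemma b5 : bounded 1 1 6. Proof. bnd (1:int) (1:int) (6:int). Qed.
Lemma b6 : bounded 2 1 3. Proof. bnd (2:int) (1:int) (3:int). Qed.

Definition P1 := fun p : int * int => (p.2 %% 3 == 0)%Z.
Definition P2 := fun p : int * int => ((p.1 - p.2) %% 3 == 0)%Z.
Definition P3 := fun p : int * int => ((p.1 + p.2) %% 3 == 0)%Z.

Ltac crunch := let x := fresh "x" in let y := fresh "y" in let m := fresh "m" in
  let h := fresh "h" in let K := fresh "K" in let hK := fresh "hK" in
  let hx := fresh "hx" in let hy := fresh "hy" in
  intros x y m h; intros; rewrite /P1 /P2 /P3 /=;
  match goal with | H : qform ?A ?B ?C _ _ = _ |- _ => case: (res3 A B C x y) => K hK end; rewrite hK in h;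
  (have : (x %% 3 = 0 \/ x %% 3 = 1 \/ x %% 3 = 2)%Z by lia);
  case=> [hx|[hx|hx]];
  (have : (y %% 3 = 0 \/ y %% 3 = 1 \/ y %% 3 = 2)%Z by lia);
  case=> [hy|[hy|hy]]; rewrite ?hx ?hy in h; lia.

Theorem mainTheorem6 :
  theta 1 1 52 = fps_add (dilate 9 (theta 1 1 6)) (Pmr 3 1 (theta 1 1 6)) /\
  theta 8 7 8  = fps_add (dilate 9 (theta 1 1 6)) (Pmr 3 2 (theta 1 1 6)) /\
  theta 4 1 13 = fps_add (dilate 9 (theta 2 1 3)) (Pmr 3 1 (theta 2 1 3)) /\
  theta 2 1 26 = fps_add (dilate 9 (theta 2 1 3)) (Pmr 3 2 (theta 2 1 3)).
Proof.
split; [|split; [|split]]; apply: functional_extensionality => n.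
- rewrite (@via 1 1 6 1 1 52 (fun p => (-p.1 - 2 * p.2, 3 * p.2))
     (fun p => (-p.1 - 2 * (p.2 %/ 3)%Z, (p.2 %/ 3)%Z)) P1 n b5 b1).
  + refine (@split3 1 1 6 P1 1 n b5 _ _ _ _); [by [] | crunch | crunch | crunch].
  + by move=> [x y]; rewrite /qform /=; ring.
  + by move=> p; rewrite /P1 /=; lia.
  + by move=> [x y]; rewrite /P1 /= => h; congr pair; lia.
  + by move=> [a b] [c d] /= [] h1 h2; congr pair; lia.
- rewrite (@via 1 1 6 8 7 8 (fun p => (-2 * p.1 + p.2, p.1 + p.2))
     (fun p => (((p.2 - p.1) %/ 3)%Z, p.2 - ((p.2 - p.1) %/ 3)%Z)) P2 n b5 b2).
  + refine (@split3 1 1 6 P2 2 n b5 _ _ _ _); [by [] | crunch | crunch | crunch].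
  + by move=> [x y]; rewrite /qform /=; ring.
  + by move=> p; rewrite /P2 /=; lia.
  + by move=> [x y]; rewrite /P2 /= => h; congr pair; lia.
  + by move=> [a b] [c d] /= [] h1 h2; congr pair; lia.
- rewrite (@via 2 1 3 4 1 13 (fun p => (-p.1 - 2 * p.2, p.1 - p.2))
     (fun p => (p.2 - ((p.1 + p.2) %/ 3)%Z, - ((p.1 + p.2) %/ 3)%Z)) P3 n b6 b3).
  + refine (@split3 2 1 3 P3 1 n b6 _ _ _ _); [by [] | crunch | crunch | crunch].
  + by move=> [x y]; rewrite /qform /=; ring.
  + by move=> p; rewrite /P3 /=; lia.
  + by move=> [x y]; rewrite /P3 /= => h; congr pair; lia.
  + by move=> [a b] [c d] /= [] h1 h2; congr pair; lia.
- rewrite (@via 2 1 3 2 1 26 (fun p => (-p.1 - p.2, 3 * p.2))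
     (fun p => (-p.1 - (p.2 %/ 3)%Z, (p.2 %/ 3)%Z)) P1 n b6 b4).
  + refine (@split3 2 1 3 P1 2 n b6 _ _ _ _); [by [] | crunch | crunch | crunch].
  + by move=> [x y]; rewrite /qform /=; ring.
  + by move=> p; rewrite /P1 /=; lia.
  + by move=> [x y]; rewrite /P1 /= => h; congr pair; lia.
  + by move=> [a b] [c d] /= [] h1 h2; congr pair; lia.
Qed.
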